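(* The truncated welfare-based dynamic posted-price (TWDPP) mechanism is ex post incentive compatible for myopic bidders and dominant-strategy incentive compatible for myopic miners.
   Context: Dynamic posted-price setting: at each time step a block with $m$ slots is produced by an active miner; $n$ bidders with private values $v_i\ge0$ submit bids $b_i$, each participating once. Given the current posted price $q>0$, $M(q)=\{i:b_i\ge q\}$; a block is $B\subseteq M(q)$ with $|B|\le m$; each $i\in B$ gets a slot and pays $q$. The TWDPP mechanism uses the random maximal (RM) allocation rule — $B$ is chosen uniformly at random among subsets of $M(q)$ of size $\min\{m,|M(q)|\}$ — and the update rule $T_{TW}(q,B)=\alpha\frac1m\sum_{i\in B}\min\{b_i,(1+\delta)q\}+(1-\alpha)q$ if $|B|<m$, and $\alpha(1+\delta)q+(1-\alpha)q$ if $|B|=m$, with $\alpha\in(0,1)$, $\delta\in(0,\infty)$. A myopic bidder's utility is $v_i-q$ if included and $0$ otherwise (in expectation over allocation randomness); ex post IC for myopic bidders means that, when the miner follows the RM rule, bidding $b_i=v_i$ weakly dominates every other bid for all bids of others. A myopic miner's utility is the total payment $q|B|$ in the current block; DSIC for myopic miners means following the RM rule is a weakly dominant, utility-maximizing strategy for the miner for all bids. *)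

(* Defs.v *)
From HB Require Import structures.
From mathcomp Require Import all_boot all_order all_algebra.
Set Implicit Arguments. Unset Strict Implicit. Unset Printing Implicit Defensive.
Import Order.TTheory GRing.Theory Num.Theory.
Local Open Scope ring_scope.

Section PostedPrice.
Variables (R : realFieldType) (n : nat).

Definition bids := 'I_n -> R.

Definition Mset (q : R) (b : bids) : {set 'I_n} := [set i | q <= b i].

Definition feasible_block (m : nat) (q : R) (b : bids) (B : {set 'I_n}) : bool :=
  (B \subset Mset q b) && (#|B| <= m)%N.

(* A posted-price mechanism: a (randomized) allocation rule, given as the
   support of a UNIFORM distribution over blocks, and a price update rule. *)
Record ppmech := PPMech {
  alloc : R -> bids -> {set {set 'I_n}};
  update : R -> bids -> {set 'I_n} -> R }.

Definition RM_alloc (m : nat) (q : R) (b : bids) : {set {set 'I_n}} :=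
  [set B : {set 'I_n} | (B \subset Mset q b) && (#|B| == minn m #|Mset q b|)].

Definition TW_update (m : nat) (alpha delta : R) (q : R) (b : bids)
    (B : {set 'I_n}) : R :=
  if (#|B| < m)%N then
    alpha * (m%:R)^-1 * (\sum_(i in B) Num.min (b i) ((1 + delta) * q))
      + (1 - alpha) * q
  else alpha * ((1 + delta) * q) + (1 - alpha) * q.

Definition TWDPP (m : nat) (alpha delta : R) : ppmech :=
  PPMech (RM_alloc m) (TW_update m alpha delta).

Definition uexp (S : {set {set 'I_n}}) (f : {set 'I_n} -> R) : R :=
  (\sum_(B in S) f B) / #|S|%:R.

Definition set_bid (b : bids) (i : 'I_n) (x : R) : bids :=
  fun j => if j == i then x else b j.

Definition bidder_utility (M : ppmech) (q : R) (b : bids) (i : 'I_n) (v : R) : R :=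
  uexp (alloc M q b) (fun B => if i \in B then v - q else 0).

Definition miner_utility_rule (M : ppmech) (q : R) (b : bids) : R :=
  uexp (alloc M q b) (fun B => q * #|B|%:R).

Definition expost_IC_myopic_bidders (M : ppmech) : Prop :=
  forall (q : R), 0 < q ->
  forall (b : bids) (i : 'I_n) (v x : R), 0 <= v ->
    bidder_utility M q (set_bid b i x) i v <= bidder_utility M q (set_bid b i v) i v.

Definition DSIC_myopic_miner (m : nat) (M : ppmech) : Prop :=
  forall (q : R), 0 < q ->
  forall (b : bids) (B : {set 'I_n}), feasible_block m q b B ->
    q * #|B|%:R <= miner_utility_rule M q b.

End PostedPrice.

(* Main.v *)
Require Import Defs.
From HB Require Import structures.
From mathcomp Require Import all_boot all_order all_algebra.
Import Order.TTheory GRing.Theory Num.Theory.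
Local Open Scope ring_scope.

Lemma exists_sub_card (T : finType) (A : {set T}) (k : nat) :
  (k <= #|A|)%N -> exists B : {set T}, (B \subset A) && (#|B| == k).
Proof.
move=> hk; exists [set x in take k (enum A)]; apply/andP; split.
  apply/subsetP => x; rewrite inE => /mem_take; by rewrite mem_enum.
rewrite cardsE; apply/eqP; have /card_uniqP -> : uniq (take k (enum A)).
  by apply: take_uniq; apply: enum_uniq.
by rewrite size_take -cardE; case: ltnP => // h; apply/eqP; rewrite eqn_leq h hk.
Qed.

Theorem mainTheorem7 (R : realFieldType) (n m : nat) (alpha delta : R) :
  (0 < m)%N -> 0 < alpha -> alpha < 1 -> 0 < delta ->
  expost_IC_myopic_bidders (TWDPP n m alpha delta) /\
  DSIC_myopic_miner m (TWDPP n m alpha delta).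
Proof.
move=> hm ha ha1 hd; split.
- move=> q hq b i v x hv; rewrite /bidder_utility /= /uexp.
  have Hi : forall y, (i \in Mset q (set_bid b i y)) = (q <= y).
    by move=> y; rewrite inE /set_bid eqxx.
  case: (leP q v) => hqv.
  + case: (leP q x) => hqx.
      rewrite /RM_alloc; have -> : Mset q (set_bid b i x) = Mset q (set_bid b i v).
        apply/setP => j; rewrite !inE /set_bid; case: eqP => // _.
        by rewrite hqx hqv.
      by [].
    rewrite (eq_bigr (fun _ => 0)); last first.
      move=> B; rewrite inE => /andP [/subsetP hs _].
      case: ifP => // /hs; rewrite Hi => h; by move: hqx; rewrite ltNge h.
    rewrite big1_eq mul0r; apply: divr_ge0 => //.
    apply: sumr_ge0 => B _; case: ifP => // _; by rewrite subr_ge0.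
  + rewrite [in X in _ <= X](eq_bigr (fun _ => 0)); last first.
      move=> B; rewrite inE => /andP [/subsetP hs _].
      case: ifP => // /hs; rewrite Hi => h; by move: hqv; rewrite ltNge h.
    rewrite big1_eq mul0r; apply: mulr_le0_ge0; last by rewrite invr_ge0.
    apply: sumr_le0 => B _; case: ifP => // _; rewrite subr_le0; exact: ltW.
- move=> q hq b B /andP [hsub hcard]; rewrite /miner_utility_rule /= /uexp.
  set M := Mset q b; set k := minn m #|M|.
  rewrite (eq_bigr (fun _ => q * k%:R)); last first.
    by move=> C; rewrite inE => /andP [_ /eqP ->].
  rewrite sumr_const -(mulr_natr (q * k%:R)) mulfK; last first.
    rewrite pnatr_eq0 -lt0n card_gt0; apply/set0Pn.
    have [C hC] := @exists_sub_card _ M k (geq_minr _ _).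
    by exists C; rewrite inE.
  rewrite ler_pM2l // ler_nat leq_min hcard /=; exact: subset_leq_card.
Qed.
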